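(* Let $p$ be an odd prime, let $k,m$ be positive integers with $\frac p2<k<p$. Then $$\binom{2mp+2k}{mp+k}\equiv(2m+1)\binom{2m}{m}\binom{2k}{k}\pmod{p^2}.$$ *)

(* Defs.v *)
From mathcomp Require Import all_boot.

(* Main.v *)
Require Import Defs.
From mathcomp Require Import all_boot zify ring.
Fixpoint Fp p n := match n with 0 => 1 | n'.+1 => (if p %| n'.+1 then 1 else n'.+1) * Fp p n' end.

Lemma fact_dec p n : 0 < p -> n`! = Fp p n * p^(n%/p) * (n%/p)`!.
Proof.
move=> p0; elim: n => [|n IH]; first by rewrite div0n.
rewrite factS IH /= divnS //.
case: ifP => H; last by rewrite add0n; ring.
have E : n.+1 = (n %/ p).+1 * p.
  by rewrite -[LHS](divnK H) divnS // H.
rewrite {1}E add1n expnS factS; ring.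
Qed.

Lemma Fcop p n : prime p -> coprime p (Fp p n).
Proof.
move=> pp; elim: n => [|n IH] /=; first by rewrite coprimen1.
rewrite coprimeMr IH andbT; case: ifP => H; first by rewrite coprimen1.
by rewrite prime_coprime // H.
Qed.

Lemma mulmod a a' b b' d : a = a' %[mod d] -> b = b' %[mod d] -> a * b = a' * b' %[mod d].
Proof. by move=> Ha Hb; rewrite -modnMm Ha Hb modnMm. Qed.

Lemma Fmod p n : prime p -> Fp p n = (Fp p (p.-1))^(n%/p) * Fp p (n%%p) %[mod p].
Proof.
move=> pp; have p0 := prime_gt0 pp.
elim: n => [|n IH]; first by rewrite div0n mod0n.
rewrite /= divnS // modnS.
case: ifP => H.
  have Hnp : n %% p = p.-1.
    have h1 : p %| (n %% p).+1.
      by rewrite -(dvdn_addr _ (dvdn_mull (n %/ p) (dvdnn p))) addnS -divn_eq.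
    have := dvdn_leq (ltn0Sn _) h1; have := ltn_pmod n p0; lia.
  by rewrite mul1n IH Hnp /= muln1 add1n expnS mulnC.
have E : n.+1 %% p = (n %% p).+1 by rewrite modnS H.
have H2 : p %| (n %% p).+1 = false by rewrite -E /dvdn modn_mod -H.
rewrite /= H2 add0n mulnCA; apply: mulmod => //.
by rewrite -E modn_mod.
Qed.


Lemma divmodP q r p : r < p -> (q * p + r) %/ p = q /\ (q * p + r) %% p = r.
Proof.
move=> rp; have p0 : 0 < p by case: p rp.
by rewrite divnMDl // divn_small // addn0 modnMDl modn_small.
Qed.

Arguments divmodP q {r p}.
Arguments mulmod {a a' b b' d}.
Lemma dvd_sub_mod p u v : u = v %[mod p] -> p %| u - v.
Proof.
move=> E; case: (leqP v u) => h; first by rewrite -eqn_mod_dvd // E.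
by rewrite (eqP (ltnW h)) dvdn0.
Qed.

Arguments dvd_sub_mod {p u v}.
Lemma final p X Y c d : prime p -> X * c = Y * d -> c = d %[mod p] -> p %| Y ->
  coprime p c -> X = Y %[mod p ^ 2].
Proof.
move=> pp E cd /dvdnP [y Hy] cop; subst Y.
have cop2 : coprime (p ^ 2) c by apply: coprimeXl.
case: (leqP (y * p) X) => h.
  apply/eqP; rewrite eqn_mod_dvd // -(Gauss_dvdl _ cop2) mulnBl E -mulnBr.
  case/dvdnP: (dvd_sub_mod (esym cd)) => z ->.
  by apply/dvdnP; exists (y * z); ring.
apply/esym/eqP; rewrite eqn_mod_dvd ?(ltnW h) // -(Gauss_dvdl _ cop2) mulnBl E -mulnBr.
case/dvdnP: (dvd_sub_mod cd) => z ->.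
by apply/dvdnP; exists (y * z); ring.
Qed.

Theorem lemma2p6 (p k m : nat) (hp : prime p) (hodd : odd p)
  (hk1 : p < 2 * k) (hk2 : k < p) (hm : 0 < m) :
  'C(2 * m * p + 2 * k, m * p + k) = (2 * m + 1) * 'C(2 * m, m) * 'C(2 * k, k) %[mod p ^ 2].
Proof.
have p0 := prime_gt0 hp.
set n := m * p + k.
set N := 2 * m * p + 2 * k.
set r := 2 * k - p.
have rp : r < p by rewrite /r; lia.
have eN : N = (2 * m + 1) * p + r by rewrite /N /r; lia.
have e2k : 2 * k = 1 * p + r by rewrite /r; lia.
have ek : k = 0 * p + k by [].
have eNn : N - n = n by rewrite /N /n; lia.
have [dN mN] := divmodP (2 * m + 1) rp.
have [d2k m2k] := divmodP 1 rp.
have [dn mn] := divmodP m hk2.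
have [dk mk] := divmodP 0 hk2.
rewrite -eN in dN mN. rewrite -e2k in d2k m2k. rewrite -/n in dn mn.
rewrite -ek in dk mk.
set X := 'C(N, n).
set A := (2 * m + 1) * 'C(2 * m, m).
set Z := 'C(2 * k, k).
set W := Fp p p.-1.
have fN := fact_dec _ N p0; rewrite dN in fN.
have fn := fact_dec _ n p0; rewrite dn in fn.
have f2k := fact_dec _ (2 * k) p0; rewrite d2k in f2k.
have fk := fact_dec _ k p0; rewrite dk in fk.
have E1 : X * (n`! * n`!) = N`!.
  by rewrite -{2}eNn bin_fact // /N /n; lia.
have E2 : Z * (k`! * k`!) = (2 * k)`!.
  by rewrite -[in X in _ * (_ * X)](_ : 2 * k - k = k) ?bin_fact //; lia.
have E3 : (2 * m + 1)`! = A * (m`! * m`!).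
  rewrite addn1 factS /A -[in X in _ * (_ * X)](_ : 2 * m - m = m); last by lia.
  rewrite -mulnA bin_fact //; lia.
have ep : p ^ (2 * m + 1) = p ^ m * p ^ m * p by rewrite addn1 expnS mul2n -addnn expnD; ring.
set Fn := Fp p n. set FN := Fp p N. set Fk := Fp p k. set F2k := Fp p (2 * k).
have H1 : X * Fn * Fn = p * FN * A.
  apply/eqP; rewrite -(@eqn_pmul2r ((p ^ m * m`!) * (p ^ m * m`!))); last first.
    by rewrite !muln_gt0 expn_gt0 p0 fact_gt0.
  apply/eqP; transitivity (X * (n`! * n`!)); first by rewrite fn; ring.
  by rewrite E1 fN ep E3; ring.
have H2 : Z * Fk * Fk = p * F2k.
  by rewrite -mulnA; move: E2; rewrite fk f2k /= !muln1 expn1 => ->; ring.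
have key : X * (Fn * Fn * F2k) = (A * Z) * (Fk * Fk * FN).
  transitivity ((X * Fn * Fn) * F2k); first by ring.
  by rewrite H1; transitivity (A * (Z * Fk * Fk) * FN); [rewrite H2|]; ring.

apply: (final _ _ _ _ _ hp key).
- rewrite /Fn /FN /Fk /F2k.
  have hn := Fmod _ n hp; rewrite dn mn -/W in hn.
  have h2k := Fmod _ (2 * k) hp; rewrite d2k m2k -/W in h2k.
  have hN := Fmod _ N hp; rewrite dN mN -/W in hN.
  rewrite (mulmod (mulmod hn hn) h2k) (mulmod (erefl ((Fp p k * Fp p k) %% p)) hN).
  have eW : W ^ (2 * m + 1) = W ^ m * W ^ m * W ^ 1 by rewrite expnD mul2n -addnn expnD.
  rewrite eW; congr (_ %% _); ring.
- apply: dvdn_mull; rewrite -(Gauss_dvdl _ (_ : coprime p (Fk * Fk))).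
    by rewrite -mulnA in H2; rewrite H2 dvdn_mulr.
  by rewrite coprimeMr Fcop.
- by rewrite !coprimeMr !Fcop.
Qed.
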